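(* Let $\Bbbk\supseteq\mathbb Q$ be a commutative ring, $\mathfrak g$ a Lie algebra over $\Bbbk$, $H=\mathcal U(\mathfrak g)$, $C=S(\mathfrak g)$, and $\xi:S(\mathfrak g)\to\mathcal U(\mathfrak g)$ the symmetrization map $x_1\cdots x_n\mapsto\frac1{n!}\sum_{\sigma\in S_n}x_{\sigma(1)}\cdots x_{\sigma(n)}$. For $h\in\mathfrak g$ let $D_h:=\xi^{-1}\circ L_h\circ\xi:S(\mathfrak g)\to S(\mathfrak g)$, where $L_h(u)=hu$ is left multiplication in $\mathcal U(\mathfrak g)$. Then for all $h,x\in\mathfrak g$ and $n\ge0$, $$D_h(x^n)=\xi^{-1}(hx^n)=\sum_{k=0}^n\binom nk B_{n-k}\,x^k\cdot\bigl((\operatorname{ad}x)^{n-k}(h)\bigr),$$ where the product on the right is taken in $S(\mathfrak g)$ and $(\operatorname{ad}x)(y)=[x,y]$.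
   Context: $\xi$ is a coalgebra isomorphism $S(\mathfrak g)\to\mathcal U(\mathfrak g)$ which is the identity on $\mathfrak g$ (here one uses that $\mathfrak g$ is such that the PBW theorem holds, e.g. $\mathfrak g$ projective over $\Bbbk$). Bernoulli numbers are defined by $\frac{z}{e^z-1}=\sum_{m\ge0}\frac{B_m}{m!}z^m$. *)

(* Defs.v *)
From HB Require Import structures.
From mathcomp Require Import all_boot all_order all_algebra all_fingroup.
Set Implicit Arguments. Unset Strict Implicit. Unset Printing Implicit Defensive.
Import Order.TTheory GRing.Theory Num.Theory.
Local Open Scope ring_scope.

Definition lie_bracket (k : comUnitRingType) (g : lmodType k) (br : g -> g -> g) : Prop :=
  [/\ (forall y, linear (br ^~ y)),
      (forall x, linear (br x)),
      (forall x, br x x = 0) &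
      (forall x y z, br x (br y z) + br y (br z x) + br z (br x y) = 0)].

Definition is_enveloping_algebra (k : comUnitRingType) (g : lmodType k)
    (br : g -> g -> g) (H : algType k) (iota : {linear g -> H}) : Prop :=
  (forall x y, iota (br x y) = iota x * iota y - iota y * iota x) /\
  (forall (A : algType k) (f : {linear g -> A}),
     (forall x y, f (br x y) = f x * f y - f y * f x) ->
     (exists phi : {lrmorphism H -> A}, forall x, phi (iota x) = f x) /\
     (forall phi psi : {lrmorphism H -> A},
        (forall x, phi (iota x) = f x) -> (forall x, psi (iota x) = f x) ->
        phi =1 psi)).

Definition is_symmetric_algebra (k : comUnitRingType) (g : lmodType k)
    (C : comAlgType k) (j : {linear g -> C}) : Prop :=
  forall (A : comAlgType k) (f : {linear g -> A}),
     (exists phi : {lrmorphism C -> A}, forall x, phi (j x) = f x) /\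
     (forall phi psi : {lrmorphism C -> A},
        (forall x, phi (j x) = f x) -> (forall x, psi (j x) = f x) ->
        phi =1 psi).

Definition is_symmetrization (k : comUnitRingType) (g : lmodType k)
    (C : comAlgType k) (j : {linear g -> C}) (H : algType k) (iota : {linear g -> H})
    (xi : {linear C -> H}) : Prop :=
  forall (n : nat) (xs : 'I_n -> g),
    xi (\prod_(i < n) j (xs i)) =
      (n`!%:R)^-1 *: \sum_(s : 'S_n) \prod_(i < n) iota (xs (s i)).

Definition Dop (k : comUnitRingType) (g : lmodType k) (C : comAlgType k)
    (H : algType k) (iota : {linear g -> H}) (xi : C -> H) (xi_inv : H -> C)
    (h : g) (u : C) : C :=
  xi_inv (iota h * xi u).

(* z/(e^z - 1) = sum_m B_m z^m / m!, i.e. ((e^z-1)/z) * sum_m (B_m/m!) z^m = 1;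
   comparing coefficients of z^m:
     sum_{j=0}^{m} (B_j / j!) * 1/(m-j+1)! = [m == 0].
   Hence b_m := B_m/m! satisfies b_0 = 1 and
     b_m = - sum_{j<m} b_j / (m-j+1)!  for m >= 1.
   bern_scaled_seq n lists b_0, ..., b_{n-1}. *)
Fixpoint bern_scaled_seq (n : nat) : seq rat :=
  match n with
  | 0 => [::]
  | n'.+1 =>
      let s := bern_scaled_seq n' in
      rcons s (if n' == 0%N then 1
               else - \sum_(j < n') nth 0 s j / ((n' - j).+1)`!%:R)
  end.

Definition bernoulli (m : nat) : rat :=
  m`!%:R * nth 0 (bern_scaled_seq m.+1) m.

(* Main.v *)
Require Import Defs.
From HB Require Import structures.
From mathcomp Require Import all_boot all_order all_algebra all_fingroup.
From mathcomp Require Import ring zify.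
Import Order.TTheory GRing.Theory Num.Theory.
Local Open Scope ring_scope.
Definition bsc (m : nat) : rat := nth 0 (bern_scaled_seq m.+1) m.

Lemma size_bss n : size (bern_scaled_seq n) = n.
Proof. by elim: n => //= n IH; rewrite size_rcons IH. Qed.

Lemma nth_bss N j : (j < N)%N -> nth 0 (bern_scaled_seq N) j = bsc j.
Proof.
elim: N => // N IH; rewrite ltnS leq_eqVlt => /orP[/eqP ->|ltjN].
  by [].
by rewrite /= nth_rcons size_bss ltjN IH.
Qed.

Lemma bern_rec m : \sum_(j < m.+1) bsc j / ((m - j).+1)`!%:R = (m == 0%N)%:R.
Proof.
rewrite big_ord_recr /= subnn /= divr1.
case: m => [|m]; first by rewrite big_ord0 add0r /bsc.
have E : nth 0 (bern_scaled_seq m.+2) m.+1 = - \sum_(j < m.+1) nth 0 (bern_scaled_seq m.+1) j / ((m.+1 - j).+1)`!%:R.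
  have -> : bern_scaled_seq m.+2 = rcons (bern_scaled_seq m.+1) (- \sum_(j < m.+1) nth 0 (bern_scaled_seq m.+1) j / ((m.+1 - j).+1)`!%:R) by [].
  by rewrite nth_rcons size_bss ltnn eqxx.
rewrite {2}/bsc E.
rewrite (eq_bigr (fun j : 'I_m.+1 => nth 0 (bern_scaled_seq m.+1) j / ((m.+1 - j).+1)`!%:R)).
  by rewrite addrN.
by move=> i _; rewrite nth_bss.
Qed.

Lemma bernoulliE m : bernoulli m = m`!%:R * bsc m.
Proof. by []. Qed.

Lemma fact_neq0 (a : nat) : (a`!%:R : rat) != 0.
Proof. by rewrite pnatr_eq0 -lt0n fact_gt0. Qed.

Lemma binq a c : (c <= a)%N -> ('C(a, c)%:R : rat) = a`!%:R / (c`!%:R * (a - c)`!%:R).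
Proof.
move=> ca; rewrite -(bin_fact ca) !natrM mulrK //.
by rewrite unitrM !unitfE !fact_neq0.
Qed.

Lemma term_id n m jj b : (jj <= m)%N -> (m <= n)%N ->
  'C(n, n - jj)%:R * (jj`!%:R * b) / ((n - jj).+1)%:R * 'C((n - jj).+1, (m - jj).+1)%:R
  = n`!%:R / (n - m)`!%:R * (b / ((m - jj).+1)`!%:R) :> rat.
Proof.
move=> jm mn.
rewrite binq; last by lia.
rewrite binq; last by lia.
have -> : (n - (n - jj) = jj)%N by lia.
have -> : ((n - jj).+1 - (m - jj).+1 = n - m)%N by lia.
rewrite factS natrM.
have h1 := fact_neq0 jj; have h2 := fact_neq0 (n - jj); have h3 := fact_neq0 (n - m).
have h4 := fact_neq0 (m - jj).+1.
have h5 : (1 + (n - jj)%:R : rat) != 0 by rewrite addrC natr1 pnatr_eq0.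
field.
by rewrite h1 h2 h3 h4 h5.
Qed.

Lemma rat_key n m : (m <= n)%N ->
  \sum_(i < n.+1) ('C(n, i)%:R * bernoulli (n - i) / (i.+1)%:R *
      (if (n - i <= m)%N then 'C(i.+1, (m - (n - i)).+1)%:R else 0))
  = (m == 0%N)%:R :> rat.
Proof.
move=> mn.
pose G i : rat := 'C(n, i)%:R * bernoulli (n - i) / (i.+1)%:R * 'C(i.+1, (m - (n - i)).+1)%:R.
rewrite (eq_bigr (fun i : 'I_n.+1 => if (n - i <= m)%N then G i else 0)); last first.
  by move=> i _; case: ifP => _; rewrite ?mulr0.
rewrite -big_mkcond /=.
rewrite (eq_bigl (fun i : 'I_n.+1 => true && (n - m <= i)%N)); last by move=> i /=; lia.
rewrite -(@big_geq_mkord _ _ _ (n - m) n.+1 xpredT G) big_rev_mkord.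
have -> : (n.+1 - (n - m) = m.+1)%N by lia.
rewrite (eq_bigr (fun jj : 'I_m.+1 => n`!%:R / (n - m)`!%:R * (bsc jj / ((m - jj).+1)`!%:R))); last first.
  move=> jj _; rewrite /G subSS bernoulliE.
  have jm : (jj <= m)%N by rewrite -ltnS.
  have -> : (n - (n - jj) = jj)%N by lia.
  by rewrite term_id.
rewrite -mulr_sumr bern_rec.
case: (m =P 0%N) => [->|]; last by rewrite mulr0.
by rewrite subn0 divff ?mulr1 // fact_neq0.
Qed.

Section Ratr.
Variable k : comUnitRingType.
Hypothesis hQ : forall n : nat, (n.+1)%:R \is a @GRing.unit k.

Lemma unit_natS (n : nat) : (0 < n)%N -> (n%:R : k) \is a GRing.unit.
Proof. by case: n => // n _; exact: hQ. Qed.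

Lemma den_unit (q : rat) : ((denq q)%:~R : k) \is a GRing.unit.
Proof.
have := denq_gt0 q; case: (denq q) => // d; rewrite ltz_nat => /unit_natS.
by [].
Qed.

Lemma ratrE (q : rat) : ratr q * (denq q)%:~R = (numq q)%:~R :> k.
Proof. by rewrite /ratr divrK // den_unit. Qed.

Lemma ratrD_k (x y : rat) : ratr (x + y) = ratr x + ratr y :> k.
Proof.
have I : (numq (x + y) * denq x * denq y = (numq x * denq y + numq y * denq x) * denq (x + y))%R.
  apply: (@intr_inj rat).
  rewrite !rmorphM rmorphD !rmorphM /= !numqE; ring.
have U : ((denq (x + y))%:~R * (denq x)%:~R * (denq y)%:~R : k) \is a GRing.unit.
  by rewrite !unitrM !den_unit.
apply: (mulIr U).
have Ek := congr1 (fun z : int => (z%:~R : k)) I; move: Ek => /=.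
rewrite !rmorphM rmorphD !rmorphM /= -!ratrE => Ek.
transitivity (ratr (x + y) * (denq (x + y))%:~R * (denq x)%:~R * (denq y)%:~R : k); first ring.
rewrite Ek; ring.
Qed.

Lemma ratrM_k (x y : rat) : ratr (x * y) = ratr x * ratr y :> k.
Proof.
have I : (numq (x * y) * denq x * denq y = (numq x * numq y) * denq (x * y))%R.
  apply: (@intr_inj rat).
  rewrite !rmorphM /= !numqE; ring.
have U : ((denq (x * y))%:~R * (denq x)%:~R * (denq y)%:~R : k) \is a GRing.unit.
  by rewrite !unitrM !den_unit.
apply: (mulIr U).
have Ek := congr1 (fun z : int => (z%:~R : k)) I; move: Ek => /=.
rewrite !rmorphM /= -!ratrE => Ek.
transitivity (ratr (x * y) * (denq (x * y))%:~R * (denq x)%:~R * (denq y)%:~R : k); first ring.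
rewrite Ek; ring.
Qed.

Lemma ratr0_k : ratr 0 = 0 :> k.
Proof. by have := ratr_nat k 0. Qed.

Lemma ratr_sum_k (I : finType) (F : I -> rat) : ratr (\sum_i F i) = \sum_i ratr (F i) :> k.
Proof. exact: (big_morph _ ratrD_k ratr0_k). Qed.

Lemma ratr_invS (n : nat) : ratr ((n.+1)%:R^-1) = ((n.+1)%:R)^-1 :> k.
Proof.
have r1 : ratr 1 = 1 :> k := ratr_nat k 1.
have H1 : ratr ((n.+1)%:R^-1) * (n.+1)%:R = 1 :> k.
  have := ratrM_k (n.+1%:R^-1) (n.+1%:R).
  by rewrite mulVf ?pnatr_eq0 // r1 ratr_nat => <-.
by apply: (mulIr (hQ n)); rewrite H1 mulVr // hQ.
Qed.
End Ratr.
Section HAlg.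
Variable k : comUnitRingType.
Variable H : lalgType k.
Variable X : H.
Definition ad (W : H) := X * W - W * X.

Lemma XW (W : H) q : X * (W * X ^+ q) = ad W * X ^+ q + W * X ^+ q.+1.
Proof. by rewrite /ad mulrBl exprS !mulrA subrK. Qed.

Lemma comm_exp (Z : H) p :
  X ^+ p * Z = \sum_(i < p.+1) (iter i ad Z * X ^+ (p - i)) *+ 'C(p, i).
Proof.
elim: p => [|p IH].
  by rewrite big_ord1 /= expr0 mul1r mulr1.
rewrite exprS -mulrA IH mulr_sumr.
rewrite (eq_bigr (fun i : 'I_p.+1 => (iter i.+1 ad Z * X ^+ (p - i)) *+ 'C(p, i)
   + (iter i ad Z * X ^+ (p.+1 - i)) *+ 'C(p, i))); last first.
  move=> i _; rewrite -mulrnDl mulrnAr XW.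
  have -> : (p.+1 - i = (p - i).+1)%N by have := ltn_ord i; lia.
  by [].
rewrite big_split /= [in RHS]big_ord_recl /=.
rewrite [in RHS](eq_bigr (fun i : 'I_p.+1 => (iter i.+1 ad Z * X ^+ (p - i)) *+ 'C(p, i.+1)
   + (iter i.+1 ad Z * X ^+ (p - i)) *+ 'C(p, i))); last first.
  by move=> i _; rewrite /bump /= add0n binS mulrnDr subSS.
rewrite big_split /= addrA [RHS]addrC; congr (_ + _).
rewrite big_ord_recl /= !subn0 !bin0; congr (_ + _).
rewrite [in RHS]big_ord_recr /= bin_small // mulr0n addr0.
by apply: eq_bigr => i _; rewrite /bump /= add0n subSS.
Qed.

Lemma sym_sum (Z : H) q :
  \sum_(p < q.+1) X ^+ p * Z * X ^+ (q - p)
  = \sum_(i < q.+1) (iter i ad Z * X ^+ (q - i)) *+ 'C(q.+1, i.+1).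
Proof.
elim: q => [|q IH].
  by rewrite !big_ord1 /= !expr0 mul1r.
rewrite big_ord_recr /= subnn expr0 mulr1 comm_exp.
rewrite (eq_bigr (fun p : 'I_q.+1 => (X ^+ p * Z * X ^+ (q - p)) * X)); last first.
  move=> p _; have -> : (q.+1 - p = (q - p).+1)%N by have := ltn_ord p; lia.
  by rewrite exprSr mulrA.
rewrite -mulr_suml IH mulr_suml.
rewrite [in RHS](eq_bigr (fun i : 'I_q.+2 => (iter i ad Z * X ^+ (q.+1 - i)) *+ 'C(q.+1, i.+1)
   + (iter i ad Z * X ^+ (q.+1 - i)) *+ 'C(q.+1, i))); last first.
  by move=> i _; rewrite binS mulrnDr.
rewrite big_split /=; congr (_ + _).
rewrite [in RHS]big_ord_recr /= bin_small // mulr0n addr0.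
apply: eq_bigr => i _; rewrite -mulrnAl -mulrA -exprSr.
rewrite mulrnAl.
by have -> : (q.+1 - i = (q - i).+1)%N by have := ltn_ord i; lia.
Qed.
End HAlg.
Arguments ad {k H} X W.
Arguments sym_sum {k H} X Z q.
Arguments comm_exp {k H} X Z p.
Lemma prod_if (R : pzRingType) (Y X : R) q (p : 'I_q.+1) :
  \prod_(i < q.+1) (if i == p then Y else X) = X ^+ p * Y * X ^+ (q - p).
Proof.
pose G (i : nat) := if i == nat_of_ord p then Y else X.
rewrite (eq_bigr (fun i : 'I_q.+1 => G i)); last by [].
rewrite -(big_mkord xpredT G).
have pq : (p <= q)%N by rewrite -ltnS.
rewrite (@big_cat_nat _ _ _ p 0 q.+1) //; last by lia.
rewrite (@big_cat_nat _ _ _ p.+1 p q.+1) //.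
rewrite big_nat1 /G eqxx /= mulrA; congr (_ * _ * _).
  rewrite (@eq_big_nat _ _ _ 0 p _ (fun _ => X)) ?prodr_const_nat ?subn0 //.
  by move=> i /andP[_ ip]; rewrite (ltn_eqF ip).
rewrite (@eq_big_nat _ _ _ p.+1 q.+1 _ (fun _ => X)) ?prodr_const_nat ?subSS //.
by move=> i /andP[pi _]; rewrite eq_sym (ltn_eqF pi).
Qed.

Lemma card_fix0 q (p : 'I_q.+1) :
  #|[pred s : 'S_q.+1 | s ord0 == p]| = #|[pred s : 'S_q.+1 | s ord0 == ord0]|.
Proof.
pose t := tperm ord0 p.
pose h := fun s : 'S_q.+1 => (s * t)%g.
have bh : bijective h.
  by exists h => s; rewrite /h -mulgA tperm2 mulg1.
rewrite -!sum1_card (reindex h (onW_bij _ bh)).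
apply: eq_bigl => s; rewrite !inE /h permM /t -{2}(tpermL ord0 p).
by rewrite (inj_eq perm_inj).
Qed.

Lemma card_fix q (p : 'I_q.+1) :
  #|[pred s : 'S_q.+1 | s ord0 == p]| = q`!.
Proof.
rewrite card_fix0.
set c := #|[pred s : 'S_q.+1 | s ord0 == ord0]|.
have tot : (q.+1`! = q.+1 * c)%N.
  rewrite -card_Sn -sum1_card (partition_big (fun s : 'S_q.+1 => s ord0) xpredT) //=.
  rewrite (eq_bigr (fun _ => c)).
    by rewrite sum_nat_const card_ord.
  move=> i _; rewrite /c; transitivity #|[pred s : 'S_q.+1 | s ord0 == i]|; first by rewrite -sum1_card.
  exact: card_fix0.
by apply/eqP; rewrite -(eqn_pmul2l (ltn0Sn q)) -tot factS.
Qed.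

Lemma sum_perm0 (V : zmodType) q (f : 'I_q.+1 -> V) :
  \sum_(s : 'S_q.+1) f (s ord0) = \sum_(p < q.+1) f p *+ q`!.
Proof.
rewrite (partition_big (fun s : 'S_q.+1 => s ord0) xpredT) //=.
apply: eq_bigr => p _.
rewrite (eq_bigr (fun _ => f p)); last by move=> s /= /eqP ->.
by rewrite -(@card_fix q p) -sumr_const.
Qed.

Theorem mainTheorem12
  (k : comUnitRingType)
  (hQ : forall n : nat, (n.+1)%:R \is a @GRing.unit k)
  (g : lmodType k) (br : g -> g -> g) (hbr : lie_bracket br)
  (H : algType k) (iota : {linear g -> H})
  (hH : is_enveloping_algebra br iota)
  (C : comAlgType k) (j : {linear g -> C})
  (hC : is_symmetric_algebra j)
  (xi : {linear C -> H}) (hxi : is_symmetrization j iota xi)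
  (xi_inv : H -> C) (hxiK : cancel xi xi_inv) (hxiK' : cancel xi_inv xi)
  (h x : g) (n : nat) :
  Dop iota xi xi_inv h (j x ^+ n) = xi_inv (iota h * iota x ^+ n) /\
  xi_inv (iota h * iota x ^+ n) =
    \sum_(i < n.+1)
       ('C(n, i)%:R * ratr (bernoulli (n - i))) *:
         (j x ^+ i * j (iter (n - i) (br x) h)).
Proof.
set X := iota x.
set Y := iota h.
have fact_unit : forall m : nat, (m`!%:R : k) \is a GRing.unit.
  by move=> m; apply: unit_natS => //; exact: fact_gt0.
have xi_pow : forall (z : g) m, xi (j z ^+ m) = iota z ^+ m.
  move=> z m; have := hxi m (fun _ => z).
  rewrite prodr_const card_ord => ->.
  rewrite (eq_bigr (fun _ => iota z ^+ m)); last by move=> s _; rewrite prodr_const card_ord.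
  by rewrite sumr_const card_Sn -scaler_nat scalerA mulVr ?scale1r.
split; first by rewrite /Dop xi_pow.
have iota_ad : forall z, iota (br x z) = ad X (iota z).
  by move=> z; rewrite (proj1 hH).
have iota_iter : forall m, iota (iter m (br x) h) = iter m (ad X) Y.
  by elim=> //= m IH; rewrite iota_ad IH.
have xi_lin : forall q (y : g), xi (j x ^+ q * j y) =
    (q.+1%:R)^-1 *: \sum_(p < q.+1) X ^+ p * iota y * X ^+ (q - p).
  move=> q y.
  pose xs := fun i : 'I_q.+1 => if i == ord0 then y else x.
  have := hxi q.+1 xs.
  rewrite big_ord_recl /= {1}/xs eqxx.
  rewrite (eq_bigr (fun _ => j x)); last first.
    by move=> i _; rewrite /xs eq_sym (negbTE (neq_lift _ _)).
  rewrite prodr_const card_ord mulrC => ->.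
  pose G := fun p : 'I_q.+1 => X ^+ p * iota y * X ^+ (q - p).
  rewrite (eq_bigr (fun s : 'S_q.+1 => G (s^-1 ord0)%g)); last first.
    move=> s _; rewrite /G -prod_if; apply: eq_bigr => i _.
    rewrite /xs -{1}(permKV s ord0) (inj_eq perm_inj).
    by case: ifP.
  rewrite (reindex_inj invg_inj) /=.
  rewrite (eq_bigr (fun s : 'S_q.+1 => G (s ord0))); last by move=> s _; rewrite invgK.
  rewrite sum_perm0 sumrMnl -scaler_nat scalerA factS natrM.
  rewrite invrM ?fact_unit ?hQ //.
  by rewrite mulrC mulrA mulrV ?fact_unit ?mul1r.
pose W := fun m : nat => iter m (ad X) Y * X ^+ (n - m).
have reidx : forall i : 'I_n.+1,
    \sum_(l < i.+1) (iter l (ad X) (iter (n - i) (ad X) Y) * X ^+ (i - l)) *+ 'C(i.+1, l.+1)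
  = \sum_(m < n.+1) (if (n - i <= m)%N then W m *+ 'C(i.+1, (m - (n - i)).+1) else 0).
  move=> i; have iln : (i <= n)%N by rewrite -ltnS.
  rewrite -big_mkcond /=.
  rewrite (eq_bigl (fun m : 'I_n.+1 => xpredT (nat_of_ord m) && (n - i <= m)%N)) //.
  rewrite -(@big_geq_mkord _ _ _ (n - i) n.+1 xpredT (fun m => W m *+ 'C(i.+1, (m - (n - i)).+1))).
  rewrite (big_addn 0 n.+1 (n - i)).
  have -> : (n.+1 - (n - i) = i.+1)%N by lia.
  rewrite big_mkord; apply: eq_bigr => l _.
  rewrite /W -iterD addnK.
  by have -> : (n - (l + (n - i)) = i - l)%N by have := ltn_ord l; lia.
rewrite -[RHS]hxiK; congr xi_inv.
rewrite linear_sum.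
rewrite (eq_bigr (fun i : 'I_n.+1 => \sum_(m < n.+1)
   (('C(n, i)%:R * ratr (bernoulli (n - i))) * (i.+1%:R)^-1 *
     (if (n - i <= m)%N then 'C(i.+1, (m - (n - i)).+1)%:R else 0)) *: W m)); last first.
  move=> i _; rewrite linearZ /= xi_lin iota_iter sym_sum reidx scalerA scaler_sumr.
  apply: eq_bigr => m _; case: ifP => _.
    by rewrite -scaler_nat !scalerA.
  by rewrite scaler0 mulr0 scale0r.
rewrite exchange_big /=.
rewrite (eq_bigr (fun m : 'I_n.+1 => (nat_of_ord m == 0%N)%:R *: W m)); last first.
  move=> m _; rewrite -scaler_suml; congr (_ *: _).
  have mn : (m <= n)%N by rewrite -ltnS.
  rewrite -(ratr_nat k (nat_of_ord m == 0%N)) -(rat_key n m mn) (ratr_sum_k _ hQ).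
  apply: eq_bigr => i _; rewrite !(ratrM_k _ hQ) (ratr_nat k) (ratr_invS _ hQ).
  by case: ifP => _; rewrite ?(ratr_nat k) ?ratr0_k.
rewrite big_ord_recl /= scale1r big1 ?addr0; first by rewrite /W subn0.
by move=> m _; rewrite scale0r.
Qed.
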